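(* Let $\rho\in\Delta_{|\mathcal S|}$ have all entries positive, let $\pi_0$ be a non-optimal policy, and let $(\bar s,\bar a)$ be a non-optimal pair with $\pi_0(\bar a\mid\bar s)>0$ and $A^{\pi^*}(\bar s,\bar a)\ge\frac{1-\gamma}{|\mathcal S||\mathcal A|}[f_\rho(\pi_0)-f_\rho(\pi^* )]$. Then for any policy $\pi$, $$\pi(\bar a\mid\bar s)\le\frac{|\mathcal S||\mathcal A|}{(1-\gamma)\rho(\bar s)}\cdot\frac{f_\rho(\pi)-f_\rho(\pi^* )}{f_\rho(\pi_0)-f_\rho(\pi^* )}.$$
   Context: An unregularized infinite-horizon discounted MDP: finite $\mathcal S$, $\mathcal A$, transition probabilities $\mathcal P(s'\mid s,a)$, cost $c$, discount $\gamma\in[0,1)$. A policy assigns $\pi(\cdot\mid s)\in\Delta_{|\mathcal A|}$. $V^\pi(s)=\mathbb E[\sum_{t\ge0}\gamma^tc(s_t,a_t)\mid s_0=s,\ a_t\sim\pi(\cdot\mid s_t),\ s_{t+1}\sim\mathcal P(\cdot\mid s_t,a_t)]$, $Q^\pi(s,a)$ the same with $a_0=a$, $A^\pi(s,a):=Q^\pi(s,a)-V^\pi(s)$. $\pi^*$ is a fixed optimal policy. $f_\rho(\pi):=\sum_s\rho(s)V^\pi(s)$. A pair $(s,a)$ is non-optimal if $\pi^*(a\mid s)=0$; a policy $\pi$ is non-optimal if $f_\rho(\pi)-f_\rho(\pi^* )>0$. (Such a pair $(\bar s,\bar a)$ exists for every non-optimal $\pi_0$.) *)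

(* Defs.v *)
From HB Require Import structures.
From mathcomp Require Import all_boot all_order all_algebra.
From mathcomp Require Import all_classical all_reals all_analysis.
Set Implicit Arguments. Unset Strict Implicit. Unset Printing Implicit Defensive.
Import Order.TTheory GRing.Theory Num.Theory.
Local Open Scope ring_scope.

Section MDP.
Variables (R : realType) (S A : finType).

(* transition kernel P s a s' = P(s' | s, a) *)
Definition is_kernel (P : S -> A -> S -> R) : Prop :=
  forall s a, (forall s', 0 <= P s a s') /\ \sum_(s' : S) P s a s' = 1.

(* policy pi s a = pi(a | s) *)
Definition is_policy (pi : S -> A -> R) : Prop :=
  forall s, (forall a, 0 <= pi s a) /\ \sum_(a : A) pi s a = 1.

Definition is_distr (rho : S -> R) : Prop :=
  (forall s, 0 <= rho s) /\ \sum_(s : S) rho s = 1.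

(* law of (s_{t+1}, a_{t+1}) from the law d of (s_t, a_t) under pi *)
Definition step (P : S -> A -> S -> R) (pi : S -> A -> R)
  (d : S -> A -> R) : S -> A -> R :=
  fun s' a' => \sum_(s : S) \sum_(a : A) d s a * P s a s' * pi s' a'.

Definition law_t P pi (d0 : S -> A -> R) (t : nat) : S -> A -> R :=
  iter t (step P pi) d0.

Definition exp_cost (c : S -> A -> R) (d : S -> A -> R) : R :=
  \sum_(s : S) \sum_(a : A) d s a * c s a.

Definition disc_cost P c (gamma : R) pi (d0 : S -> A -> R) : R :=
  limn (fun n : nat => \sum_(t < n) gamma ^+ t * exp_cost c (law_t P pi d0 t)).

(* V^pi(s): s_0 = s, a_0 ~ pi(.|s) *)
Definition Vf P c gamma pi (s : S) : R :=
  disc_cost P c gamma pi (fun s0 a0 => (s0 == s)%:R * pi s0 a0).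

(* Q^pi(s,a): s_0 = s, a_0 = a *)
Definition Qf P c gamma pi (s : S) (a : A) : R :=
  disc_cost P c gamma pi (fun s0 a0 => ((s0 == s) && (a0 == a))%:R).

Definition Af P c gamma pi (s : S) (a : A) : R :=
  Qf P c gamma pi s a - Vf P c gamma pi s.

Definition f_rho P c gamma (rho : S -> R) pi : R :=
  \sum_(s : S) rho s * Vf P c gamma pi s.

Definition is_optimal P c gamma pistar : Prop :=
  is_policy pistar /\
  forall pi, is_policy pi -> forall s, Vf P c gamma pistar s <= Vf P c gamma pi s.

End MDP.

(* Main.v *)
Require Import Defs.
From HB Require Import structures.
From mathcomp Require Import all_boot all_order all_algebra.
From mathcomp Require Import all_classical all_reals all_analysis.
From mathcomp Require Import ring lra.
Import Order.TTheory GRing.Theory Num.Theory.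
Import numFieldNormedType.Exports.
Local Open Scope ring_scope.
Local Open Scope classical_set_scope.
Section Dev.
Variables (R : realType) (S A : finType) (P : S -> A -> S -> R) (c : S -> A -> R) (gamma : R).
Hypothesis HP : is_kernel P.
Hypothesis g0 : 0 <= gamma.
Hypothesis g1 : gamma < 1.

Lemma sum_ind (T : finType) (y : T) (F : T -> R) : \sum_(x : T) (x == y)%:R * F x = F y.
Proof.
rewrite (eq_bigr (fun x => if x == y then F x else 0)); last first.
  by move=> x _; case: eqP => _; rewrite ?mul1r ?mul0r.
by rewrite -big_mkcond big_pred1_eq.
Qed.

Lemma ind_and (b1 b2 : bool) : (b1 && b2)%:R = b1%:R * b2%:R :> R.
Proof. by case: b1; case: b2; rewrite ?mul1r ?mul0r. Qed.

Definition nd (d : S -> A -> R) := (forall s a, 0 <= d s a) /\ \sum_s \sum_a d s a = 1.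

Lemma step_nd pi d : is_policy pi -> nd d -> nd (step P pi d).
Proof.
move=> Hpi [d0 d1]; split.
  move=> s' a'; rewrite /step; apply: sumr_ge0 => s _; apply: sumr_ge0 => a _.
  by rewrite !mulr_ge0 //; [case: (HP s a) | case: (Hpi s')].
rewrite /step (eq_bigr (fun s' => \sum_s \sum_a d s a * P s a s')); last first.
  move=> s' _; rewrite exchange_big /=; apply: eq_bigr => s _.
  rewrite exchange_big /=; apply: eq_bigr => a _.
  by rewrite -mulr_sumr (proj2 (Hpi s')) mulr1.
rewrite exchange_big /= -d1; apply: eq_bigr => s _.
rewrite exchange_big /=; apply: eq_bigr => a _.
by rewrite -mulr_sumr (proj2 (HP s a)) mulr1.
Qed.

Lemma law_nd pi d t : is_policy pi -> nd d -> nd (law_t P pi d t).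
Proof.
move=> Hpi Hd; elim: t => [//|t IH].
by rewrite /law_t iterS; apply: step_nd.
Qed.

Definition Cmax := \sum_s \sum_a `|c s a|.

Lemma Cmax_ge0 : 0 <= Cmax.
Proof. by apply: sumr_ge0 => s _; apply: sumr_ge0. Qed.

Lemma c_le s a : `|c s a| <= Cmax.
Proof.
rewrite /Cmax (bigD1 s) //= (bigD1 a) //= -addrA lerDl.
by rewrite addr_ge0 // sumr_ge0 // => *; rewrite sumr_ge0.
Qed.

Lemma exp_cost_bound d : nd d -> `|exp_cost c d| <= Cmax.
Proof.
move=> [d0 d1]; rewrite /exp_cost.
apply: le_trans (ler_norm_sum _ _ _) _.
apply: (@le_trans _ _ (\sum_s \sum_a d s a * Cmax)).
  apply: ler_sum => s _; apply: le_trans (ler_norm_sum _ _ _) _.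
  apply: ler_sum => a _; rewrite normrM ger0_norm //.
  by rewrite ler_wpM2l // c_le.
under eq_bigr do rewrite -mulr_suml.
by rewrite -mulr_suml d1 mul1r.
Qed.

Definition Sn pi d (n : nat) : R :=
  \sum_(t < n) gamma ^+ t * exp_cost c (law_t P pi d t).

Lemma Sn_cvg pi d : is_policy pi -> nd d -> cvgn (Sn pi d).
Proof.
move=> Hpi Hd.
have -> : Sn pi d = series (fun t => gamma ^+ t * exp_cost c (law_t P pi d t)).
  by apply/funext => n; rewrite /series /= big_mkord.
apply: normed_cvg.
apply: (@series_le_cvg _ _ (geometric Cmax gamma)).
- by move=> n; exact: normr_ge0.
- by move=> n; rewrite /geometric /= mulr_ge0 ?exprn_ge0 // Cmax_ge0.
- move=> n; rewrite /geometric /= normrM ger0_norm ?exprn_ge0 // mulrC.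
  by rewrite ler_wpM2r ?exprn_ge0 // exp_cost_bound //; apply: law_nd.
- by apply: is_cvg_geometric_series; rewrite ger0_norm.
Qed.
Lemma step_lin pi (I : finType) (k : I -> R) (d : I -> S -> A -> R) :
  step P pi (fun s a => \sum_i k i * d i s a) =
  fun s a => \sum_i k i * step P pi (d i) s a.
Proof.
apply/funext => s'; apply/funext => a'; rewrite /step.
transitivity (\sum_s \sum_a \sum_i k i * (d i s a * P s a s' * pi s' a')).
  apply: eq_bigr => s _; apply: eq_bigr => a _.
  rewrite -!mulrA mulr_suml; apply: eq_bigr => i _.
  by rewrite !mulrA.
symmetry; under eq_bigr do rewrite mulr_sumr.
rewrite exchange_big /=; apply: eq_bigr => s _.
under eq_bigr do rewrite mulr_sumr.
by rewrite exchange_big.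
Qed.

Lemma law_lin pi (I : finType) (k : I -> R) (d : I -> S -> A -> R) t :
  law_t P pi (fun s a => \sum_i k i * d i s a) t =
  fun s a => \sum_i k i * law_t P pi (d i) t s a.
Proof.
elim: t => [//|t IH].
rewrite /law_t !iterS -/(law_t P pi _ t) IH step_lin //.
Qed.

Lemma exp_cost_lin (I : finType) (k : I -> R) (d : I -> S -> A -> R) :
  exp_cost c (fun s a => \sum_i k i * d i s a) = \sum_i k i * exp_cost c (d i).
Proof.
rewrite /exp_cost.
transitivity (\sum_s \sum_a \sum_i k i * (d i s a * c s a)).
  apply: eq_bigr => s _; apply: eq_bigr => a _.
  rewrite mulr_suml; apply: eq_bigr => i _.
  by rewrite !mulrA.
symmetry; under eq_bigr do rewrite mulr_sumr.
rewrite exchange_big /=; apply: eq_bigr => s _.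
under eq_bigr do rewrite mulr_sumr.
by rewrite exchange_big.
Qed.

Lemma Sn_lin pi (I : finType) (k : I -> R) (d : I -> S -> A -> R) n :
  Sn pi (fun s a => \sum_i k i * d i s a) n = \sum_i k i * Sn pi (d i) n.
Proof.
rewrite /Sn.
under eq_bigr do rewrite law_lin exp_cost_lin mulr_sumr.
rewrite exchange_big /=; apply: eq_bigr => i _.
rewrite mulr_sumr; apply: eq_bigr => t _.
by rewrite mulrCA.
Qed.

Lemma cvg_seqsum (I : Type) (r : seq I) (f : I -> nat -> R) (l : I -> R) :
  (forall i, f i @ \oo --> l i) ->
  (fun n => \sum_(i <- r) f i n) @ \oo --> \sum_(i <- r) l i.
Proof.
move=> H; elim: r => [|i r IH].
  have -> : (fun n : nat => \sum_(i <- [::]) f i n) = fun=> 0.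
    by apply/funext => n; rewrite big_nil.
  by rewrite big_nil; apply: cvg_cst.
have -> : (fun n => \sum_(j <- i :: r) f j n) =
          (f i + fun n => \sum_(j <- r) f j n).
  by apply/funext => n; rewrite big_cons.
by rewrite big_cons; apply: cvgD.
Qed.

Lemma cvg_finsum (I : finType) (f : I -> nat -> R) (l : I -> R) :
  (forall i, f i @ \oo --> l i) ->
  (fun n => \sum_i f i n) @ \oo --> \sum_i l i.
Proof. exact: cvg_seqsum. Qed.

Lemma disc_Sn pi d : disc_cost P c gamma pi d = limn (Sn pi d).
Proof. by []. Qed.

Lemma disc_lin pi (I : finType) (k : I -> R) (d : I -> S -> A -> R) :
  is_policy pi -> (forall i, nd (d i)) ->
  disc_cost P c gamma pi (fun s a => \sum_i k i * d i s a) =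
  \sum_i k i * disc_cost P c gamma pi (d i).
Proof.
move=> Hpi Hd; rewrite disc_Sn.
apply/cvg_lim => //.
have -> : Sn pi (fun s a => \sum_i k i * d i s a) =
          fun n => \sum_i k i * Sn pi (d i) n.
  by apply/funext => n; rewrite Sn_lin.
apply: cvg_finsum => i.
have -> : (fun n => k i * Sn pi (d i) n) = ((fun=> k i) \* Sn pi (d i)) by [].
apply: cvgM; first exact: cvg_cst.
exact: Sn_cvg.
Qed.

Lemma Sn_shift pi d n :
  Sn pi d n.+1 = exp_cost c d + gamma * Sn pi (step P pi d) n.
Proof.
rewrite /Sn big_ord_recl /= expr0 mul1r; congr (_ + _).
rewrite mulr_sumr; apply: eq_bigr => t _.
by rewrite exprS -mulrA /law_t add0n -iterSr.
Qed.

Lemma disc_shift pi d : is_policy pi -> nd d ->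
  disc_cost P c gamma pi d =
  exp_cost c d + gamma * disc_cost P c gamma pi (step P pi d).
Proof.
move=> Hpi Hd; rewrite !disc_Sn.
apply/cvg_lim => //.
rewrite -cvg_shiftS.
have -> : [sequence Sn pi d n.+1]_n =
   ((fun=> exp_cost c d) + ((fun=> gamma) \* Sn pi (step P pi d))).
  by apply/funext => n; rewrite /= Sn_shift.
apply: cvgD; first exact: cvg_cst.
apply: cvgM; first exact: cvg_cst.
by apply: Sn_cvg => //; apply: step_nd.
Qed.
Definition deltaSA (s : S) (a : A) : S -> A -> R :=
  fun s0 a0 => ((s0 == s) && (a0 == a))%:R.
Definition deltaS (pi : S -> A -> R) (s : S) : S -> A -> R :=
  fun s0 a0 => (s0 == s)%:R * pi s0 a0.

Lemma sum_ind2 (s : S) (a : A) (F : S -> A -> R) :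
  \sum_s0 \sum_a0 ((s0 == s) && (a0 == a))%:R * F s0 a0 = F s a.
Proof.
under eq_bigr do under eq_bigr do rewrite ind_and -mulrA.
under eq_bigr do rewrite -mulr_sumr sum_ind.
by rewrite sum_ind.
Qed.

Lemma nd_deltaSA s a : nd (deltaSA s a).
Proof.
split; first by move=> *; rewrite /deltaSA ler0n.
rewrite /deltaSA.
transitivity (\sum_s0 \sum_a0 ((s0 == s) && (a0 == a))%:R * (fun _ _ => 1 : R) s0 a0);
  last by rewrite sum_ind2.
by apply: eq_bigr => *; apply: eq_bigr => *; rewrite mulr1.
Qed.

Lemma nd_deltaS pi s : is_policy pi -> nd (deltaS pi s).
Proof.
move=> Hpi; split.
  by move=> s0 a0; rewrite /deltaS mulr_ge0 ?ler0n //; case: (Hpi s0).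
rewrite /deltaS; under eq_bigr do rewrite -mulr_sumr.
by rewrite sum_ind (proj2 (Hpi s)).
Qed.

Lemma deltaS_comb pi s :
  (fun s0 a0 => (s0 == s)%:R * pi s0 a0) =
  fun s0 a0 => \sum_a pi s a * deltaSA s a s0 a0.
Proof.
apply/funext => s0; apply/funext => a0; rewrite /deltaSA.
under eq_bigr do rewrite ind_and mulrCA.
rewrite -mulr_sumr; case: eqP => [->|_]; last by rewrite !mul0r.
rewrite !mul1r.
under eq_bigr do rewrite mulrC eq_sym.
by rewrite sum_ind.
Qed.

Lemma step_deltaSA pi s a :
  step P pi (deltaSA s a) = fun s' a' => \sum_x P s a x * deltaS pi x s' a'.
Proof.
apply/funext => s'; apply/funext => a'; rewrite /step /deltaSA /deltaS.
under eq_bigr do under eq_bigr do rewrite -!mulrA.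
rewrite sum_ind2.
under eq_bigr do rewrite mulrCA eq_sym.
by rewrite sum_ind.
Qed.

Lemma exp_cost_deltaSA s a : exp_cost c (deltaSA s a) = c s a.
Proof. by rewrite /exp_cost /deltaSA sum_ind2. Qed.

Lemma VQ pi s : is_policy pi ->
  Vf P c gamma pi s = \sum_a pi s a * Qf P c gamma pi s a.
Proof.
move=> Hpi; rewrite /Vf deltaS_comb disc_lin //.
exact: nd_deltaSA.
Qed.

Lemma QB pi s a : is_policy pi ->
  Qf P c gamma pi s a = c s a + gamma * \sum_x P s a x * Vf P c gamma pi x.
Proof.
move=> Hpi; rewrite /Qf -/(deltaSA s a) disc_shift //; last exact: nd_deltaSA.
rewrite exp_cost_deltaSA step_deltaSA disc_lin //.
by move=> x; apply: nd_deltaS.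
Qed.
Lemma maxprinciple pi (D : S -> R) : is_policy pi ->
  (forall s, D s <= gamma * \sum_a pi s a * \sum_x P s a x * D x) ->
  forall s, D s <= 0.
Proof.
move=> Hpi H s.
case: (@arg_maxP _ R S s xpredT D isT) => m _ Hm.
suff: D m <= 0 by apply: le_trans (Hm s isT).
have h : D m <= gamma * D m.
  apply: le_trans (H m) _; apply: ler_wpM2l => //.
  apply: (@le_trans _ _ (\sum_a pi m a * D m)).
    apply: ler_sum => a _; apply: ler_wpM2l; first by case: (Hpi m).
    apply: (@le_trans _ _ (\sum_x P m a x * D m)).
      apply: ler_sum => x _; apply: ler_wpM2l; first by case: (HP m a).
      exact: Hm.
    by rewrite -mulr_suml (proj2 (HP m a)) mul1r.
  by rewrite -mulr_suml (proj2 (Hpi m)) mul1r.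
have h2 : (1 - gamma) * D m <= 0 by rewrite mulrBl mul1r subr_le0.
by move: h2; rewrite pmulr_rle0 // subr_gt0.
Qed.

Lemma adv_ge0 pistar : is_optimal P c gamma pistar ->
  forall s a, Vf P c gamma pistar s <= Qf P c gamma pistar s a.
Proof.
move=> [Hps Hopt] s a; rewrite leNgt; apply/negP => Hlt.
pose pi' := fun s0 a0 => if s0 == s then (a0 == a)%:R else pistar s0 a0 : R.
have Hpi' : is_policy pi'.
  move=> s0; rewrite /pi'; case: eqP => _; last exact: Hps.
  split; first by move=> a0; rewrite ler0n.
  by rewrite (eq_bigr (fun x => (x == a)%:R * 1)) ?sum_ind // => x _; rewrite mulr1.
pose D x := Vf P c gamma pi' x - Vf P c gamma pistar x.
pose E x := \sum_a pi' x a * Qf P c gamma pistar x a - Vf P c gamma pistar x.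
have key x : D x = E x + gamma * \sum_a pi' x a * \sum_y P x a y * D y.
  rewrite /D /E VQ // addrAC; congr (_ - _).
  under eq_bigr do rewrite QB //.
  under [X in _ = X + _]eq_bigr do rewrite QB //.
  rewrite mulr_sumr -big_split /=; apply: eq_bigr => a0 _.
  under [X in _ = _ + _ * (_ * X)]eq_bigr => y _ do rewrite /D mulrBr.
  rewrite sumrB; ring.
have Ele x : E x <= 0.
  rewrite /E /pi'; case: eqP => [->|_].
    by rewrite sum_ind subr_le0; apply: ltW.
  by rewrite -VQ // subrr.
have Dge x : 0 <= D x by rewrite /D subr_ge0; apply: Hopt.
have Dle : forall x, D x <= 0.
  apply: (@maxprinciple pi' D Hpi') => x.
  by rewrite {1}key gerDr.
have D0 y : D y = 0 by apply/le_anti; rewrite Dle Dge.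
have := key s; rewrite D0.
under eq_bigr do (under eq_bigr do rewrite D0 mulr0; rewrite big1 // mulr0).
rewrite big1 // mulr0 addr0 /E /pi' eqxx sum_ind => /eqP.
rewrite eq_sym subr_eq0 => /eqP h.
by move: Hlt; rewrite h ltxx.
Qed.
Lemma main_bound pistar pi (rho : S -> R) sb ab :
  is_optimal P c gamma pistar -> (forall s, 0 < rho s) -> is_policy pi ->
  rho sb * (pi sb ab * Af P c gamma pistar sb ab) <=
  f_rho P c gamma rho pi - f_rho P c gamma rho pistar.
Proof.
move=> Hopt Hpos Hpi; have [Hps Hle] := Hopt.
have Hsb : pi sb ab * Af P c gamma pistar sb ab <=
           Vf P c gamma pi sb - Vf P c gamma pistar sb.
  rewrite /Af.
  apply: (@le_trans _ _ (\sum_a pi sb a * (Qf P c gamma pistar sb a - Vf P c gamma pistar sb))).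
    rewrite (bigD1 ab) //= lerDl sumr_ge0 // => a _.
    rewrite mulr_ge0 ?subr_ge0 ?adv_ge0 //; by case: (Hpi sb).
  rewrite (@VQ pi sb Hpi) -[X in _ <= _ - X]mul1r -(proj2 (Hpi sb)) mulr_suml -sumrB.
  apply: ler_sum => a _; rewrite -mulrBr ler_wpM2l //; first by case: (Hpi sb).
  rewrite lerD2r !QB // lerD2l ler_wpM2l // ler_sum // => x _.
  rewrite ler_wpM2l //; first by case: (HP sb a).
  exact: Hle.
rewrite /f_rho -sumrB.
apply: (@le_trans _ _ (rho sb * (Vf P c gamma pi sb - Vf P c gamma pistar sb))).
  by rewrite ler_wpM2l //; exact: ltW.
rewrite (bigD1 sb) //= mulrBr lerDl sumr_ge0 // => s _.
rewrite -mulrBr mulr_ge0 ?subr_ge0 ?Hle //; exact: ltW.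
Qed.
End Dev.

Theorem lemma3p8 (R : realType) (S A : finType)
  (P : S -> A -> S -> R) (c : S -> A -> R) (gamma : R)
  (pistar pi0 : S -> A -> R) (rho : S -> R) (sb : S) (ab : A) :
  is_kernel P ->
  0 <= gamma -> gamma < 1 ->
  is_optimal P c gamma pistar ->
  is_distr rho -> (forall s, 0 < rho s) ->
  is_policy pi0 ->
  f_rho P c gamma rho pi0 - f_rho P c gamma rho pistar > 0 ->
  pistar sb ab = 0 ->
  pi0 sb ab > 0 ->
  Af P c gamma pistar sb ab >=
    (1 - gamma) / (#|S|%:R * #|A|%:R)
    * (f_rho P c gamma rho pi0 - f_rho P c gamma rho pistar) ->
  forall pi : S -> A -> R, is_policy pi ->
  pi sb ab <=
    (#|S|%:R * #|A|%:R) / ((1 - gamma) * rho sb)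
    * ((f_rho P c gamma rho pi - f_rho P c gamma rho pistar)
       / (f_rho P c gamma rho pi0 - f_rho P c gamma rho pistar)).
Proof.
move=> HP g0 g1 Hopt _ Hpos _ HD0 _ _ HA pi Hpi.
have Hm := @main_bound R S A P c gamma HP g0 g1 pistar pi rho sb ab Hopt Hpos Hpi.
move: HD0 HA Hm.
set D0 := f_rho P c gamma rho pi0 - f_rho P c gamma rho pistar.
set D := f_rho P c gamma rho pi - f_rho P c gamma rho pistar.
set al := Af P c gamma pistar sb ab.
set N := (#|S|%:R * #|A|%:R : R).
set X := pi sb ab.
move=> HD0 HA Hm.
have NS : (0 < #|S|)%N by apply/card_gt0P; exists sb.
have NA : (0 < #|A|)%N by apply/card_gt0P; exists ab.
have Npos : 0 < N by rewrite /N mulr_gt0 // ltr0n.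
have gpos : 0 < 1 - gamma by rewrite subr_gt0.
have rpos := Hpos sb.
have X0 : 0 <= X by rewrite /X; case: (Hpi sb).
have -> : N / ((1 - gamma) * rho sb) * (D / D0) =
          D / ((1 - gamma) / N * rho sb * D0).
  by field; rewrite ?gt_eqF ?lt0r_neq0 //; apply/and4P; split;
     rewrite ?gt_eqF ?lt0r_neq0.
rewrite ler_pdivlMr; last by rewrite !mulr_gt0 // invr_gt0.
apply: le_trans Hm.
have -> : X * ((1 - gamma) / N * rho sb * D0) =
          rho sb * (X * ((1 - gamma) / N * D0)) by ring.
apply: ler_wpM2l; first exact: ltW.
by apply: ler_wpM2l.
Qed.
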